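(* Let $\mathbb{L}$ be a $\sigma$-complete orthomodular lattice and let $\mathcal{S}_b(\mathbb{L})$ be the set of bounded spectral families in $\mathbb{L}$. Then the map $E\mapsto f_E$ from $\mathcal{S}_b(\mathbb{L})$ to the set of functions $\mathcal{Q}(\mathbb{L})\to\mathbb{R}$, where $f_E(\mathfrak{B}):=\inf\{\lambda\in\mathbb{R}\mid E_\lambda\in\mathfrak{B}\}$, is injective.
   Context: A spectral family in a $\sigma$-complete lattice $\mathbb{L}$ (with $0$ and $1$) is a map $E:\mathbb{R}\to\mathbb{L}$, $\lambda\mapsto E_\lambda$, with (1) $E_\lambda\le E_\mu$ for $\lambda\le\mu$; (2) $E_\lambda=\bigwedge_{\mu>\lambda}E_\mu$; (3) $\bigwedge_\lambda E_\lambda=0$, $\bigvee_\lambda E_\lambda=1$ (infima/suprema over real index sets may be computed along the rationals). $E$ is bounded if there are $a\le b$ with $E_\lambda=0$ for $\lambda<a$ and $E_\lambda=1$ for $\lambda\ge b$. A dual ideal of $\mathbb{L}$ is a nonempty subset $\mathcal{J}$ with $0\notin\mathcal{J}$, upward closed, and closed under finite meets; a quasipoint is a maximal dual ideal. The Stone spectrum $\mathcal{Q}(\mathbb{L})$ is the set of quasipoints with the topology having as base the sets $\mathcal{Q}_a(\mathbb{L})=\{\mathfrak{B}\in\mathcal{Q}(\mathbb{L})\mid a\in\mathfrak{B}\}$, $a\in\mathbb{L}$. *)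

(* Defs.v *)
From HB Require Import structures.
From mathcomp Require Import all_boot all_order all_algebra.
From mathcomp Require Import boolp classical_sets reals Rstruct.
From Stdlib Require Import Rdefinitions.
Set Implicit Arguments. Unset Strict Implicit. Unset Printing Implicit Defensive.
Import Order.TTheory GRing.Theory Num.Theory.
Local Open Scope classical_set_scope.
Local Open Scope ring_scope.

Section Lat.
Context {disp : Order.disp_t} {L : tbLatticeType disp}.

Definition is_glb (S : set L) (x : L) : Prop :=
  (forall y, S y -> (x <= y)%O) /\ (forall z, (forall y, S y -> (z <= y)%O) -> (z <= x)%O).
Definition is_lub (S : set L) (x : L) : Prop :=
  (forall y, S y -> (y <= x)%O) /\ (forall z, (forall y, S y -> (y <= z)%O) -> (x <= z)%O).

Definition sigma_complete : Prop :=
  forall a : nat -> L, (exists x, is_glb (range a) x) /\ (exists x, is_lub (range a) x).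

Definition orthocomplementation (orth : L -> L) : Prop :=
  [/\ forall a, orth (orth a) = a,
      forall a b, (a <= b)%O -> (orth b <= orth a)%O,
      forall a, Order.meet a (orth a) = \bot%O &
      forall a, Order.join a (orth a) = \top%O].

Definition orthomodular (orth : L -> L) : Prop :=
  forall a b, (a <= b)%O -> b = Order.join a (Order.meet b (orth a)).

Definition orthomodular_lattice (orth : L -> L) : Prop :=
  orthocomplementation orth /\ orthomodular orth.

Definition spectral_family (E : R -> L) : Prop :=
  [/\ forall l m : R, l <= m -> (E l <= E m)%O,
      forall l : R, is_glb [set E m | m in [set m : R | l < m]] (E l),
      is_glb (range E) \bot%O &
      is_lub (range E) \top%O].

Definition bounded_spectral_family (E : R -> L) : Prop :=
  spectral_family E /\
  exists a b : R, a <= b /\ (forall l, l < a -> E l = \bot%O) /\ (forall l, b <= l -> E l = \top%O).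

Definition dual_ideal (J : set L) : Prop :=
  [/\ J !=set0, ~ J \bot%O,
      forall a b, J a -> (a <= b)%O -> J b &
      forall a b, J a -> J b -> J (Order.meet a b)].

Definition quasipoint (B : set L) : Prop :=
  dual_ideal B /\ forall J, dual_ideal J -> B `<=` J -> J = B.

Definition stone_spectrum : Type := {B : set L | quasipoint B}.

Definition f_of (E : R -> L) (B : stone_spectrum) : R :=
  inf [set l : R | (proj1_sig B) (E l)].

End Lat.

(* Main.v *)
Require Import Defs.
From HB Require Import structures.
From mathcomp Require Import all_boot all_order all_algebra.
From mathcomp Require Import boolp classical_sets reals Rstruct.
From Stdlib Require Import Rdefinitions.
Set Implicit Arguments. Unset Strict Implicit. Unset Printing Implicit Defensive.
Import Order.TTheory GRing.Theory Num.Theory.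
Local Open Scope classical_set_scope.
Local Open Scope ring_scope.

Section Aux.
Context {disp : Order.disp_t} {L : tbLatticeType disp}.

Lemma exists_qp (a : L) : a <> \bot%O ->
  exists B : stone_spectrum (L := L), proj1_sig B a.
Proof.
move=> a0.
pose P := fun X : set L => X = set0 \/ (dual_ideal X /\ X a).
have [A [PA Amax]] : exists A, P A /\ forall B, A `<` B -> ~ P B.
  apply: Zorn_bigcup => F FP Ftot.
  have [->|/set0P[x [X FX Xx]]] := eqVneq (\bigcup_(X in F) X) set0; first by left.
  have [X0|[[_ XnB Xup XI] Xa]] := FP X FX; first by rewrite X0 in Xx.
  right; split; last by exists X.
  split.
  - by exists x; exists X.
  - move=> [Y FY Yb].
    have [Y0|[[_ YnB _ _] _]] := FP Y FY; first by rewrite Y0 in Yb.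
    exact: YnB.
  - move=> u v [Y FY Yu] uv.
    have [Y0|[[_ _ Yup _] _]] := FP Y FY; first by rewrite Y0 in Yu.
    by exists Y => //; apply: Yup uv.
  - move=> u v [Y FY Yu] [Z FZ Zv].
    have [YZ|ZY] := Ftot Y Z FY FZ.
    + have [Z0|[[_ _ _ ZI] _]] := FP Z FZ; first by rewrite Z0 in Zv.
      by exists Z => //; apply: ZI => //; apply: YZ.
    + have [Y0|[[_ _ _ YI] _]] := FP Y FY; first by rewrite Y0 in Yu.
      by exists Y => //; apply: YI => //; apply: ZY.
pose U := [set y : L | (a <= y)%O].
have dU : dual_ideal U.
  split.
  - by exists a; rewrite /U /=.
  - by move=> /= h; apply: a0; apply/le_anti; rewrite h le0x.
  - by move=> u v /= au uv; apply: le_trans uv.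
  - by move=> u v /= au av; rewrite /U /= lexI au av.
have [A0|[dA Aa]] := PA.
  exfalso; apply: (Amax U); last first.
    by rewrite /P; right; split=> //=; exact: lexx.
  rewrite A0; split; first by move=> ? [].
  by move=> /(_ a) h; apply: h; exact: lexx.
have qA : quasipoint A.
  split => // J dJ AJ.
  apply/seteqP; split; last exact: AJ.
  apply: contrapT => nJA.
  apply: (Amax J); last by rewrite /P; right; split => //; apply: AJ.
  by split.
by exists (exist _ A qA).
Qed.

Lemma f_le (E : R -> L) (HE : bounded_spectral_family E)
  (B : stone_spectrum (L := L)) l : proj1_sig B (E l) -> f_of E B <= l.
Proof.
move: (proj2_sig B) => [[_ BnB _ _] _] BE.
case: HE => _ [a [b [_ [Ha _]]]].
rewrite /f_of.
have : lbound [set l : R | proj1_sig B (E l)] a.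
  move=> x /= Bx; rewrite leNgt; apply/negP => xa.
  by apply: BnB; rewrite -(Ha x xa).
move=> lb.
apply: (ge_inf (E := [set l : R | proj1_sig B (E l)])) => //.
by exists a.
Qed.

Lemma f_lt (E : R -> L) (HE : bounded_spectral_family E)
  (B : stone_spectrum (L := L)) l : f_of E B < l -> proj1_sig B (E l).
Proof.
move: (proj2_sig B) => [[[x Bx] BnB Bup _] _].
case: HE => [[Emon _ _ _] [a [b [_ [_ Hb]]]]].
rewrite /f_of => hl.
have ne : [set l : R | proj1_sig B (E l)] !=set0.
  exists b => /=; rewrite Hb //; apply: Bup Bx _; exact: lex1.
have [y /= By yl] := inf_lt ne hl.
by apply: Bup By _; apply: Emon; apply: ltW.
Qed.

Lemma one_dir (orth : L -> L) (Horth : orthomodular_lattice orth)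
  (E F : R -> L) (HE : bounded_spectral_family E) (HF : bounded_spectral_family F) :
  f_of E = f_of F -> forall l, (E l <= F l)%O.
Proof.
move=> EF l.
case: Horth => [[_ _ orthI _] OM].
apply: contrapT => nEF.
have [[mu [hmu hn]]|H] := pselect (exists mu, l < mu /\ ~~ (E l <= F mu)%O); last first.
  apply: nEF; case: HF => [[_ Fglb _ _] _].
  apply: (Fglb l).2 => _ [m /= lm <-].
  apply/negPn/negP => hn; apply: H; by exists m.
pose c := Order.meet (E l) (F mu).
pose a := Order.meet (E l) (orth c).
have a0 : a <> \bot%O.
  move=> a0; apply/negP: hn.
  have := OM c (E l) (leIl _ _); rewrite -/a a0 joinx0 => ->.
  by rewrite negbK; exact: leIr.
have [B Ba] := exists_qp a0.
have [[_ BnB Bup BI] _] := proj2_sig B.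
have BEl : proj1_sig B (E l) by apply: Bup Ba _; exact: leIl.
have fE : f_of E B < mu by apply: le_lt_trans (f_le HE BEl) hmu.
have BFmu : proj1_sig B (F mu) by apply: (f_lt HF); rewrite -EF.
have Bc : proj1_sig B c by apply: BI.
apply: BnB.
have -> : (\bot%O : L) = Order.meet a c.
  apply/le_anti; rewrite le0x /=.
  rewrite -(orthI c) lexI leIr /=; exact: le_trans (leIl a c) (leIr (orth c) (E l)).
exact: BI Ba Bc.
Qed.

End Aux.

Theorem proposition2p7 (disp : Order.disp_t) (L : tbLatticeType disp) (orth : L -> L)
  (Horth : orthomodular_lattice orth) (Hsig : sigma_complete (L := L))
  (E F : R -> L) (HE : bounded_spectral_family E) (HF : bounded_spectral_family F) :
  f_of E = f_of F -> E = F.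
Proof.
move=> EF; apply: funext => l; apply/le_anti.
by rewrite (one_dir Horth HE HF EF) (one_dir Horth HF HE (esym EF)).
Qed.
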